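(* Let $\Sigma$ be an oriented graph on $n$ vertices with skew adjacency matrix $S$ and walk-matrix $W=W(\Sigma)$ satisfying $\det W\neq 0$, let $P$ be a permutation matrix with $P^{\mathrm T}SP=S^{\mathrm T}$, let $p$ be an odd prime, and for $\lambda\in\{1,-1\}$ let $V_\lambda\subset\mathbb{F}_p^n$ denote the eigenspace of $P$ (viewed over $\mathbb{F}_p$) for the eigenvalue $\lambda$. If $n$ is even then $\dim V_1=\dim V_{-1}=n/2$; if $n$ is odd then $\dim V_1=(n+1)/2$ and $\dim V_{-1}=(n-1)/2$.
   Context: The skew adjacency matrix $S=(S_{ij})$ of an oriented graph on vertices $v_1,\dots,v_n$ has $S_{ij}=1$ if $(v_i,v_j)$ is a directed edge, $S_{ij}=-1$ if $(v_j,v_i)$ is a directed edge, and $S_{ij}=0$ otherwise. The walk-matrix is $W(\Sigma)=[e,Se,\ldots,S^{n-1}e]$ with $e$ the all-ones vector. *)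

(* Defs.v *)
From mathcomp Require Import all_boot all_order all_algebra all_fingroup.
Set Implicit Arguments. Unset Strict Implicit. Unset Printing Implicit Defensive.
Import GRing.Theory Num.Theory.
Local Open Scope ring_scope.

(* An oriented graph on vertex set 'I_n: a relation E (E i j = "(v_i,v_j) is
   a directed edge") with no pair of opposite arcs; this also forbids loops. *)
Definition oriented_graph n (E : rel 'I_n) : Prop :=
  forall i j, E i j -> ~~ E j i.

Definition skew_adj n (E : rel 'I_n) : 'M[int]_n :=
  \matrix_(i, j) (if E i j then 1 else if E j i then -1 else 0).

(* Walk matrix W = [e, S e, ..., S^(n-1) e]: column k is S^k e. *)
Definition walk_matrix n (S : 'M[int]_n) : 'M[int]_n :=
  \matrix_(i, k) ((S ^+ k) *m (const_mx 1 : 'cV[int]_n)) i (@ord0 0).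

(* Eigenspace of a square matrix A (acting on COLUMN vectors v, A v = a v),
   represented as a matrix whose row space is {v^T | (A - a) v = 0}. *)
Definition col_eigenspace (F : fieldType) n (A : 'M[F]_n) (a : F) : 'M[F]_n :=
  kermx ((A - a%:M)^T).

(* Main.v *)
Set Warnings "-notation-overridden,-ambiguous-paths".
Require Import Defs.
From mathcomp Require Import all_boot all_order all_algebra all_fingroup.
From mathcomp Require Import zify.
Set Implicit Arguments. Unset Strict Implicit. Unset Printing Implicit Defensive.
Import GRing.Theory Num.Theory.
Local Open Scope ring_scope.

Lemma rank_diag (F : fieldType) n (d : 'rV[F]_n) :
  \rank (diag_mx d) = (\sum_(i < n) (d ord0 i != 0%R))%N.
Proof.
elim: n d => [|n IH] d.
  by rewrite big_ord0; apply/eqP; rewrite -leqn0 rank_leq_row.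
have -> : diag_mx d = diag_mx (row_mx (@lsubmx F 1 1 n (d : 'rV_(1+n))) (rsubmx (d : 'rV_(1+n)))).
  by rewrite hsubmxK.
rewrite diag_mx_row; transitivity (\rank (diag_mx (@lsubmx F 1 1 n (d : 'rV_(1+n)))) + \rank (diag_mx (rsubmx (d : 'rV_(1+n)))))%N; first by exact (@rank_diag_block_mx F 1 1 n n _ _).
rewrite IH big_ord_recl; congr addn; last first.
  by apply: eq_bigr => i _; rewrite mxE; congr (d 0 _ != 0); apply: val_inj.
have -> : d 0 ord0 = lsubmx (d : 'rV_(1 + n)) ord0 ord0 by rewrite mxE; congr (d _ _); apply: val_inj.
move: (lsubmx _) => l.
case: eqP => [Hz|/eqP nz] /=.
  have -> : diag_mx l = 0 by apply/matrixP => i j; rewrite !ord1 !mxE Hz mul0rn.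
  by rewrite mxrank0.
by rewrite mxrank_unit // unitmxE unitfE det_mx11 mxE eqxx mulr1n.
Qed.

Lemma sum_odd n : (\sum_(k < n) odd k = n./2)%N.
Proof.
elim: n => [|n IH]; first by rewrite big_ord0.
by rewrite big_ord_recr /= IH uphalf_half addnC.
Qed.

Lemma sum_even n : (\sum_(k < n) ~~ odd k = n - n./2)%N.
Proof.
elim: n => [|n IH]; first by rewrite big_ord0.
rewrite big_ord_recr /= IH uphalf_half.
have := odd_double_half n; rewrite -muln2; case: (odd n) => /= h; lia.
Qed.

Lemma rank_map_le (F : fieldType) m n (A : 'M[int]_(m, n)) :
  (\rank (map_mx (intr : int -> F) A) <= \rank (map_mx (intr : int -> rat) A))%N.
Proof.
set Ap := map_mx _ A.
pose f := maxrankfun Ap.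
have rkB : row_full (rowsub f Ap)^T.
  by rewrite /row_full mxrank_tr; have := maxrowsub_free Ap; rewrite /row_free => /eqP ->.
have U := fullrowsub_unit rkB.
move: U; move: (fullrankfun rkB) => g U.
have detz : \det (rowsub g (rowsub f A)^T) != 0.
  move: U; rewrite !unitmxE !unitfE.
  have -> : rowsub g (rowsub f Ap)^T = map_mx intr (rowsub g (rowsub f A)^T).
    by apply/matrixP => i j; rewrite !mxE.
  by rewrite det_map_mx => H; apply/eqP => H0; move: H; rewrite H0 rmorph0 eqxx.
have Uq : rowsub g (rowsub f (map_mx (intr : int -> rat) A))^T \in unitmx.
  rewrite unitmxE unitfE.
  have -> : rowsub g (rowsub f (map_mx (intr : int -> rat) A))^T = map_mx intr (rowsub g (rowsub f A)^T).
    by apply/matrixP => i j; rewrite !mxE.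
  by rewrite det_map_mx intr_eq0.
have := mxrank_unit Uq => {}Uq.
rewrite -[X in (X <= _)%N]Uq rowsubE.
apply: leq_trans (mxrankM_maxr _ _) _.
by rewrite mxrank_tr rowsubE; apply: mxrankM_maxr.
Qed.

Unset Implicit Arguments.
Theorem corollary2p12 (n : nat) (E : rel 'I_n) (s : 'S_n) (p : nat) :
  oriented_graph E ->
  \det (walk_matrix (skew_adj E)) != 0 ->
  (perm_mx s)^T *m skew_adj E *m perm_mx s = (skew_adj E)^T ->
  prime p -> odd p ->
  let V1 := col_eigenspace (perm_mx s : 'M['F_p]_n) 1 in
  let Vm1 := col_eigenspace (perm_mx s : 'M['F_p]_n) (-1) in
  (~~ odd n -> \rank V1 = (n %/ 2)%N /\ \rank Vm1 = (n %/ 2)%N) /\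
  (odd n -> \rank V1 = (n.+1 %/ 2)%N /\ \rank Vm1 = (n.-1 %/ 2)%N).
Proof.
move=> orE detW HP pp op V1 Vm1.
set S := skew_adj E.
set P : 'M[int]_n := perm_mx s.
have Str : S^T = - S.
  apply/matrixP => i j; rewrite !mxE.
  have := orE i j; have := orE j i.
  case: (E i j); case: (E j i) => /= h1 h2; rewrite ?opprK ?oppr0 //; by case: (h1 isT).
have PPt : P *m P^T = 1%:M by rewrite /P tr_perm_mx -perm_mxM mulgV perm_mx1.
have PtP : P^T *m P = 1%:M by rewrite /P tr_perm_mx -perm_mxM mulVg perm_mx1.
have Hk : forall k, P^T *m S^+k *m P = (-1)^+k *: S^+k.
  elim => [|k IH]; first by rewrite !expr0 scale1r mulmx1 PtP.
  rewrite exprSr -mulmxE.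
  have -> : P^T *m (S ^+ k *m S) *m P = (P^T *m S^+k *m P) *m (P^T *m S *m P).
    by rewrite !mulmxA -(mulmxA _ P) PPt mulmx1.
  by rewrite IH HP Str mulmxN -scalemxAl exprS mulN1r scaleNr.
set e : 'cV[int]_n := const_mx 1.
have Pe : P *m e = e by rewrite -row_permE; apply/matrixP => i j; rewrite !mxE.
have He : forall k, P^T *m (S^+k *m e) = (-1)^+k *: (S^+k *m e).
  by move=> k; rewrite -{1}Pe !mulmxA Hk -scalemxAl.
set W := walk_matrix S.
set D : 'M[int]_n := diag_mx (\row_k ((-1)^+k)).
have PW : P^T *m W = W *m D.
  apply/matrixP => i k; rewrite mul_mx_diag.
  have -> : (P^T *m W) i k = (P^T *m (S^+k *m e)) i 0.
    by rewrite !mxE; apply: eq_bigr => j _; rewrite !mxE.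
  by rewrite He !mxE mulrC.
pose fq := (intr : int -> rat).
have Wq : map_mx fq W \in unitmx.
  by rewrite unitmxE unitfE det_map_mx intr_eq0.
have PWq : (map_mx fq P)^T *m map_mx fq W = map_mx fq W *m map_mx fq D.
  by rewrite map_trmx -!map_mxM PW.
have rq : forall c : int, \rank (map_mx fq (P - c%:M)) =
    (\sum_(k < n) (((-1)^+k - c)%:~R != 0%R :> rat))%N.
  move=> c.
  rewrite -mxrank_tr map_mxB map_scalar_mx linearB /= tr_scalar_mx.
  rewrite -(mxrankMfree _ (_ : row_free (map_mx fq W))); last by rewrite row_free_unit.
  rewrite mulmxBl PWq -scalar_mxC -mulmxBr eqmxMfull; last by rewrite row_full_unit.
  have -> : map_mx fq D - (fq c)%:M = diag_mx (\row_k (((-1)^+k - c)%:~R : rat)).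
    apply/matrixP => i j; rewrite !mxE; case: eqP => _ /=; rewrite ?mulr0n ?mulr1n ?subrr //.
    by rewrite rmorphB.
  by rewrite rank_diag; apply: eq_bigr => k _; rewrite mxE.
have rq1 : \rank (map_mx fq (P - 1%:M)) = n./2.
  rewrite rq -sum_odd; apply: eq_bigr => k _.
  by rewrite intr_eq0 subr_eq0 -signr_odd; case: odd.
have rq2 : \rank (map_mx fq (P - (-1)%:M)) = (n - n./2)%N.
  rewrite rq -sum_even; apply: eq_bigr => k _.
  by rewrite intr_eq0 subr_eq0 -signr_odd; case: odd.
pose fp := (intr : int -> 'F_p).
have rp1 : (\rank (map_mx fp (P - 1%:M)) <= n./2)%N by rewrite -rq1; apply: rank_map_le.
have rp2 : (\rank (map_mx fp (P - (-1)%:M)) <= n - n./2)%N by rewrite -rq2; apply: rank_map_le.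
have two : (2%:R : 'F_p) != 0.
  rewrite -(dvdn_pcharf (pchar_Fp pp)); apply/negP => /(@dvdn_leq _ 2 isT) h.
  have := prime_gt1 pp => h2; have ep : p = 2%N by lia. by rewrite ep in op.
have Hsum : (n <= \rank (map_mx fp (P - 1%:M)) + \rank (map_mx fp (P - (-1)%:M)))%N.
  have Hn : \rank (map_mx fp ((2 : int)%:M) : 'M_n) = n.
    rewrite map_scalar_mx mxrank_unit // unitmxE det_scalar unitfE expf_neq0 //.
  apply: (@leq_trans (\rank (map_mx fp ((2:int)%:M) : 'M_n))); first by rewrite Hn.
  have -> : (2 : int)%:M = (P - (-1)%:M) - (P - 1%:M) :> 'M_n.
    apply/matrixP => i j; rewrite !mxE; case: eqP => _ /=; lia.
  by rewrite map_mxB; apply: leq_trans (mxrank_add _ _) _; rewrite mxrank_opp addnC.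
have E1 : (perm_mx s : 'M['F_p]_n) - 1%:M = map_mx fp (P - 1%:M).
  by rewrite map_mxB map_perm_mx map_scalar_mx rmorph1.
have E2 : (perm_mx s : 'M['F_p]_n) - (-1)%:M = map_mx fp (P - (-1)%:M).
  by rewrite map_mxB map_perm_mx map_scalar_mx rmorphN1.
have R1 : \rank V1 = (n - \rank (map_mx fp (P - 1%:M)))%N.
  by rewrite /V1 /col_eigenspace mxrank_ker mxrank_tr E1.
have R2 : \rank Vm1 = (n - \rank (map_mx fp (P - (-1)%:M)))%N.
  by rewrite /Vm1 /col_eigenspace mxrank_ker mxrank_tr E2.
rewrite R1 R2.
move: rp1 rp2 Hsum.
have := odd_double_half n; rewrite -divn2 -muln2.
have := modn2 n.
case: (odd n) => /= h1 h2 h3 h4 h5; split => // _; split; lia.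
Qed.
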